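(* Suppose that $F_k$ satisfies \begin{equation*} \begin{bmatrix} R^{-1} & F_k \\ F_k^T & -\alpha \big((A+BF_k)^T\tilde{P}+\tilde{P}(A+BF_k)\big)-Q \end{bmatrix} \succ 0. \end{equation*} Then the optimization problem of maximizing $\delta_k$ subject to the performance constraint holding for every $\xi \in [0,\delta_k]$, with the feedback gain fixed to $F_k$, is feasible (i.e., it admits a strictly positive $\delta_k$).
   Context: Consider the LTI system $\dot x(t)=Ax(t)+Bu(t)$, $x(0)=x_0$, with $(A,B)$ stabilizable, under the sample-and-hold law $u(t)=F_k x_k$, $x_k:=x(t_k)$, for $t\in[t_k,t_k+\delta_k)$. Let $Q\succ 0$, $R\succ 0$, let $\tilde F$ be a stabilizing feedback gain and $\tilde P\succ 0$ the unique solution of $(A+B\tilde F)^T\tilde P+\tilde P(A+B\tilde F)+Q+\tilde F^TR\tilde F=0$, and let $V(x)=x^T\tilde P x$ and $\alpha>1$. The cost-to-go is $J_k(F_k,\xi;x_k)=\int_{t_k}^{t_k+\xi}(x(t)^TQx(t)+u(t)^TRu(t))\,dt$. The performance constraint is $J_k(F_k,\xi;x_k)\le \alpha\big(V(x(t_k))-V(x(t_k+\xi))\big)$. The problem considered is: maximize $\delta_k$ subject to this constraint for every $\xi\in[0,\delta_k]$, with $F_k$ fixed. *)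

(* Defs.v *)
From HB Require Import structures.
From mathcomp Require Import all_boot all_order all_algebra.
From mathcomp Require Import all_classical all_reals all_analysis.
Set Implicit Arguments. Unset Strict Implicit. Unset Printing Implicit Defensive.
Import Order.TTheory GRing.Theory Num.Theory.
Import numFieldNormedType.Exports.
Local Open Scope classical_set_scope.
Local Open Scope ring_scope.

Definition quad (R : realType) (n : nat) (M : 'M[R]_n) (v : 'cV[R]_n) : R :=
  (v^T *m M *m v) 0 0.

Definition posdef (R : realType) (n : nat) (M : 'M[R]_n) : Prop :=
  M^T = M /\ forall v : 'cV[R]_n, v != 0 -> 0 < quad M v.

Definition hurwitz (R : realType) (n : nat) (M : 'M[R]_n) : Prop :=
  forall y : R -> 'cV[R]_n,
    (forall t : R, is_derive t (1 : R) y (M *m y t)) ->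
    y t @[t --> +oo%R] --> (0 : 'cV[R]_n).

Definition stabilizable (R : realType) (n m : nat)
  (A : 'M[R]_n) (B : 'M[R]_(n, m)) : Prop :=
  exists K : 'M[R]_(m, n), hurwitz (A + B *m K).

(* cost-to-go over [t_k, t_k + xi], in local time s = t - t_k,
   along the trajectory x with constant input u = F x0 *)
Definition cost_to_go (R : realType) (n m : nat) (Q : 'M[R]_n) (Rw : 'M[R]_m)
  (F : 'M[R]_(m, n)) (x0 : 'cV[R]_n) (x : R -> 'cV[R]_n) (xi : R) : R :=
  Rintegral lebesgue_measure `[0, xi]
    (fun s => quad Q (x s) + quad Rw (F *m x0)).

(* Main.v *)
Require Import Defs.
From HB Require Import structures.
From mathcomp Require Import all_boot all_order all_algebra.
From mathcomp Require Import all_classical all_reals all_analysis.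
From mathcomp Require Import ring lra.
Set Implicit Arguments. Unset Strict Implicit. Unset Printing Implicit Defensive.
Import Order.TTheory GRing.Theory Num.Theory.
Import numFieldNormedType.Exports.
Local Open Scope classical_set_scope.
Local Open Scope ring_scope.

Section H.
Variable R : realType.
Lemma comp_is_derive p q (y : R -> 'M[R]_(p, q)) (t : R) (dy : 'M[R]_(p, q)) :
  is_derive t (1:R) y dy -> forall i j, is_derive t (1:R) (fun s => y s i j) (dy i j).
Proof.
move=> hd i j.
have dy' : derivable y t 1 by case: hd.
have := (derivable_mxP y t 1).1 dy' i j => dc.
apply: DeriveDef => //.
have := derive_mx dy'; rewrite derive_val => ->.
by rewrite mxE.
Qed.

Lemma is_derive_comps p q (y : R -> 'M[R]_(p, q)) (t : R) (dy : 'M[R]_(p, q)) :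
  (forall i j, is_derive t (1:R) (fun s => y s i j) (dy i j)) -> is_derive t (1:R) y dy.
Proof.
move=> hc.
have dy' : derivable y t 1.
  by apply/derivable_mxP => i j; case: (hc i j).
apply: DeriveDef => //.
rewrite (derive_mx dy'); apply/matrixP => i j; rewrite mxE.
by rewrite derive_val.
Qed.

Lemma is_derive_mulmx p q r (M : 'M[R]_(p, q)) (y : R -> 'M[R]_(q, r)) (t : R) (dy : _) :
  is_derive t (1:R) y dy -> is_derive t (1:R) (fun s => M *m y s) (M *m dy).
Proof.
move=> hd; apply: is_derive_comps => i j.
have -> : (fun s => (M *m y s) i j) = \sum_(k < q) (fun s => M i k * y s k j).
  by apply/funext => s; rewrite fct_sumE mxE.
rewrite mxE; apply: is_derive_sum => k.
have -> : (fun s => M i k * y s k j) = M i k \*: (fun s => y s k j) by [].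
exact/is_deriveZ/comp_is_derive.
Qed.

Lemma is_derive_addc p q (y : R -> 'M[R]_(p, q)) c (t : R) (dy : _) :
  is_derive t (1:R) y dy -> is_derive t (1:R) (fun s => y s + c) dy.
Proof.
move=> hd; rewrite -[dy]addr0.
have -> : (fun s => y s + c) = y + cst c by [].
exact: is_deriveD.
Qed.

Definition bil n (M : 'M[R]_n) (u w : 'cV[R]_n) := (u^T *m M *m w) 0 0.

Lemma is_derive_bil n (M : 'M[R]_n) (u w : R -> 'cV[R]_n) (t : R) (du dw : 'cV[R]_n) :
  is_derive t (1:R) u du -> is_derive t (1:R) w dw ->
  is_derive t (1:R) (fun s => bil M (u s) (w s)) (bil M du (w t) + bil M (u t) dw).
Proof.
move=> hu hw.
have hMw := is_derive_mulmx M hw.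
have -> : (fun s => bil M (u s) (w s)) =
   \sum_(k < n) ((fun s => u s k 0) * (fun s => (M *m w s) k 0)).
  apply/funext => s; rewrite fct_sumE /bil -mulmxA mxE.
  by apply: eq_bigr => k _; rewrite mxE.
apply: is_derive_eq; first apply: is_derive_sum => k.
  apply: is_deriveM; [exact: comp_is_derive hu _ _|exact: comp_is_derive hMw _ _].
rewrite /bil -!mulmxA !mxE -big_split /=. apply: eq_bigr => k _. idtac.
by rewrite !mxE addrC /GRing.scale /= mulrC [X in _ + X]mulrC.
Qed.

Lemma deriv_cont (g dg : R -> R) :
  (forall t, is_derive t (1:R) g (dg t)) -> continuous g.
Proof.
move=> h t; apply: differentiable_continuous.
by apply/derivable1_diffP; case: (h t).
Qed.

Lemma Rint_le (f : R -> R) (c xi : R) : continuous f -> 0 <= xi ->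
  (forall s, 0 <= s <= xi -> f s <= c) ->
  Rintegral lebesgue_measure `[0, xi] f <= c * xi.
Proof.
move=> cf xi0 hf.
apply: (@le_trans _ _ (Rintegral lebesgue_measure `[0, xi] (fun _ => c))).
  apply: le_Rintegral => //.
  - apply: continuous_compact_integrable; first exact: segment_compact.
    exact: continuous_subspaceT.
  - apply: continuous_compact_integrable; first exact: segment_compact.
    by apply: continuous_subspaceT => ?; exact: cvg_cst.
rewrite Rintegral_cst // /= lebesgue_measure_itv /= lte_fin.
case: ltP => [_|]; first by rewrite sube0. idtac.
move=> h; have -> : xi = 0 by apply/eqP; rewrite eq_le h xi0.
by rewrite !mulr0.
Qed.

Lemma Rint_zero (f : R -> R) (xi : R) :
  (forall s, 0 <= s <= xi -> f s = 0) ->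
  Rintegral lebesgue_measure `[0, xi] f = 0.
Proof.
move=> hf.
rewrite (@eq_Rintegral _ _ _ _ _ (fun _ => 0)); last first.
  by move=> s; rewrite inE /= in_itv /= => /hf.
by rewrite Rintegral_cst // mul0r.
Qed.

Lemma bil1E n (u w : 'cV[R]_n) : bil 1%:M u w = \sum_k u k 0 * w k 0.
Proof. by rewrite /bil mulmx1 mxE; apply: eq_bigr => k _; rewrite mxE. Qed.

Lemma bil1C n (u w : 'cV[R]_n) : bil 1%:M u w = bil 1%:M w u.
Proof. by rewrite !bil1E; apply: eq_bigr => k _; rewrite mulrC. Qed.

Lemma bil1_ge0 n (v : 'cV[R]_n) : 0 <= bil 1%:M v v.
Proof. by rewrite bil1E; apply: sumr_ge0 => k _; rewrite -expr2 sqr_ge0. Qed.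

Lemma bil1_eq0 n (v : 'cV[R]_n) : bil 1%:M v v = 0 -> v = 0.
Proof.
rewrite bil1E => h; apply/matrixP => i j; rewrite (ord1 j) mxE.
have h0 : forall k, true -> 0 <= v k 0 * v k 0.
  by move=> k _; rewrite -expr2 sqr_ge0.
have := @psumr_eq0P _ _ predT _ h0 h i isT.
by move/eqP; rewrite mulf_eq0 orbb => /eqP.
Qed.

Lemma sq_le_sum n (v : 'cV[R]_n) i : v i 0 * v i 0 <= bil 1%:M v v.
Proof.
rewrite bil1E (bigD1 i) //= lerDl; apply: sumr_ge0 => k _.
by rewrite -expr2 sqr_ge0.
Qed.

Lemma bil1_bound n (M : 'M[R]_n) (v : 'cV[R]_n) :
  bil 1%:M v (M *m v) <= (2 * \sum_i \sum_j `|M i j|) * bil 1%:M v v.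
Proof.
rewrite [in leLHS]bil1E; set W := bil _ v v.
rewrite -mulrA mulr_suml mulr_sumr; apply: ler_sum => i _.
rewrite mxE mulr_suml mulr_sumr mulr_sumr; apply: ler_sum => j _.
have h1 := sq_le_sum v i; have h2 := sq_le_sum v j.
have e1 : v i 0 * (M i j * v j 0) <= `|M i j| * `|v i 0| * `|v j 0|.
  apply: (le_trans (ler_norm _)); rewrite !normrM.
  by rewrite mulrCA mulrA.
have hm : 0 <= `|M i j| by [].
have ha : 0 <= `|v i 0| by [].
have hb : 0 <= `|v j 0| by [].
have sa : v i 0 * v i 0 = `|v i 0| * `|v i 0| by rewrite -normrM ger0_norm // -expr2 sqr_ge0.
have sb : v j 0 * v j 0 = `|v j 0| * `|v j 0| by rewrite -normrM ger0_norm // -expr2 sqr_ge0.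
rewrite sa in h1; rewrite sb in h2.
have := mulr_ge0 hm (sqr_ge0 (`|v i 0| - `|v j 0|)).
move: e1 h1 h2 hm ha hb; set a := `|v i 0|; set b := `|v j 0|; set m := `|M i j|.
move=> e1 h1 h2 hm ha hb hs.
have k1 : 0 <= m * (W - a * a) by apply: mulr_ge0 => //; rewrite subr_ge0.
have k2 : 0 <= m * (W - b * b) by apply: mulr_ge0 => //; rewrite subr_ge0.
have hW : 0 <= m * W by apply: mulr_ge0 => //; exact: bil1_ge0.
have : m * (a - b) ^+ 2 = m * (a * a) + m * (b * b) - 2 * (m * a * b) by ring.
move=> eq; rewrite eq in hs.
apply: (le_trans e1); lra.
Qed.

Lemma posdef_unit m (Rw : 'M[R]_m) : posdef Rw -> Rw \in unitmx.
Proof.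
move=> [sym pd]; rewrite unitmxE unitfE; apply/negP => /det0P [v v0 vR].
have : v^T != 0 by rewrite trmx_eq0.
move/pd; rewrite /quad trmxK vR mul0mx mxE ltxx //.
Qed.

Lemma schur n m (Rw : 'M[R]_m) (F : 'M[R]_(m, n)) (M22 : 'M[R]_n) x0 :
  posdef Rw -> posdef (block_mx (invmx Rw) F F^T M22) -> x0 != 0 ->
  quad Rw (F *m x0) < quad M22 x0.
Proof.
move=> pR [_ pB] x00.
have uR := posdef_unit pR.
have [sR _] := pR.
set y := F *m x0.
set a := - (Rw *m y).
have w0 : col_mx a x0 != 0.
  by rewrite col_mx_eq0 negb_and x00 orbT.
have := pB _ w0.
rewrite /quad tr_col_mx mul_row_block mul_row_col.
have -> : a^T *m invmx Rw = - y^T.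
  by rewrite /a linearN /= trmx_mul sR mulNmx mulmxK.
have -> : x0^T *m F^T = y^T by rewrite /y trmx_mul.
rewrite addNr mul0mx add0r mulmxDl [(_ *m _ + _) 0 0]mxE.
have -> : a^T *m F *m x0 = - (y^T *m Rw *m y).
  by rewrite /a linearN /= trmx_mul sR !mulNmx -mulmxA.
rewrite mxE; lra.
Qed.

Lemma quad_bil n (M : 'M[R]_n) v : quad M v = bil M v v.
Proof. by []. Qed.

Lemma quad0 n (M : 'M[R]_n) : quad M 0 = 0.
Proof. by rewrite /quad mulmx0 mxE. Qed.

Lemma zero_sol n (A : 'M[R]_n) (x : R -> 'cV[R]_n) : x 0 = 0 ->
  (forall s : R, is_derive s (1:R) x (A *m x s)) ->
  exists T : R, 0 < T /\ forall s, 0 <= s <= T -> x s = 0.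
Proof.
move=> x00 hx.
pose W : R -> R := fun s => bil 1%:M (x s) (x s).
pose dW := fun s => bil 1%:M (A *m x s) (x s) + bil 1%:M (x s) (A *m x s).
have W0 : W 0 = 0 by rewrite /W x00 /bil mulmx0 mxE.
clear x00.
have hW : forall s, is_derive s (1:R) W (dW s).
  by move=> s; exact: is_derive_bil.
pose k := 2 * (2 * \sum_i \sum_j `|A i j|).
have hk : 0 <= k.
  by rewrite !mulr_ge0 //; apply: sumr_ge0 => i _; apply: sumr_ge0.
have bnd : forall s, dW s <= k * W s.
  move=> s; rewrite /dW bil1C -mulr2n -mulr_natl /k -mulrA.
  by rewrite ler_pM2l //; apply: bil1_bound.
pose T := (2 * k + 2)^-1.
have hT : 0 < T by rewrite invr_gt0; lra.
have h2k : 2 * k + 2 != 0 by apply/negP => /eqP h; lra.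
have hTe : T * (2 * k + 2) = 1 by rewrite /T mulVf.
have cW : continuous W := deriv_cont hW.
have Wge0 : forall s, 0 <= W s by move=> s; exact: bil1_ge0.
have [c cin hmax] := EVT_max (ltW hT) (continuous_subspaceT cW).
have Wc : W c <= 0.
  move: cin; rewrite in_itv /= => /andP [c0 cT].
  have [c00|cpos] := eqVneq c 0; first by rewrite c00 W0.
  have cp : 0 < c by rewrite lt_def cpos c0.
  have [d din hd] := MVT cp (fun s _ => hW s) (continuous_subspaceT cW).
  move: din; rewrite in_itv /= => /andP [d0 dc].
  have hWd : W d <= W c by apply: hmax; rewrite in_itv /= (ltW d0) /= (ltW (lt_le_trans dc cT)).
  rewrite W0 subr0 in hd.
  have h1 : dW d * c <= k * W c * c.
    apply: ler_wpM2r => //; apply: (le_trans (bnd d)); exact: ler_wpM2l.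
  have h2 : k * W c * c <= k * W c * T.
    by apply: ler_wpM2l => //; apply: mulr_ge0.
  have hz : W c * (T * (2 * k + 2)) = W c by rewrite hTe mulr1.
  have hzT : 0 <= W c * T by apply: mulr_ge0 => //; exact: ltW.
  have := Wge0 c.
  move: hd h1 h2 hz hzT; set z := W c; set p := dW d => hd h1 h2 hz hzT hz0.

  have : z * (T * (2 * k + 2)) = 2 * (k * z * T) + 2 * (z * T) by ring.
  lra.
exists T; split => // s /andP [s0 sT].
apply: bil1_eq0; apply/eqP; rewrite eq_le bil1_ge0 andbT.
apply: (le_trans _ Wc); apply: hmax; rewrite in_itv /= s0 sT //.
Qed.

Lemma quad_lin n (a : R) (M N : 'M[R]_n) v :
  quad (a *: M - N) v = a * quad M v - quad N v.
Proof.
by rewrite /quad mulmxBr mulmxBl -scalemxAr -scalemxAl !mxE.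
Qed.

Lemma quadD n (M N : 'M[R]_n) v : quad (M + N) v = quad M v + quad N v.
Proof. by rewrite /quad mulmxDr mulmxDl !mxE. Qed.

Lemma ball0 (e s : R) : 0 <= s < e -> ball (0:R) e s.
Proof.
move=> /andP [s0 se]; rewrite -ball_normE /ball_ /= sub0r normrN ger0_norm //.
Qed.


End H.

Theorem proposition2 (R : realType) (n m : nat)
  (A : 'M[R]_n) (B : 'M[R]_(n, m)) (Q : 'M[R]_n) (Rw : 'M[R]_m)
  (Ft : 'M[R]_(m, n)) (Pt : 'M[R]_n) (alpha : R) (Fk : 'M[R]_(m, n)) :
  stabilizable A B ->
  posdef Q -> posdef Rw ->
  hurwitz (A + B *m Ft) ->
  posdef Pt ->
  (A + B *m Ft)^T *m Pt + Pt *m (A + B *m Ft) + Q + Ft^T *m Rw *m Ft = 0 ->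
  (forall P' : 'M[R]_n,
     (A + B *m Ft)^T *m P' + P' *m (A + B *m Ft) + Q + Ft^T *m Rw *m Ft = 0 ->
     P' = Pt) ->
  1 < alpha ->
  posdef (block_mx (invmx Rw) Fk Fk^T
            (- alpha *: ((A + B *m Fk)^T *m Pt + Pt *m (A + B *m Fk)) - Q)) ->
  forall (x0 : 'cV[R]_n) (x : R -> 'cV[R]_n),
    x 0 = x0 ->
    (forall s : R, is_derive s (1 : R) x (A *m x s + B *m (Fk *m x0))) ->
    exists delta : R, 0 < delta /\
      forall xi : R, 0 <= xi <= delta ->
        cost_to_go Q Rw Fk x0 x xi <= alpha * (quad Pt x0 - quad Pt (x xi)).
Proof.
move=> _ _ pR _ _ _ _ halpha pB x0 x hx00 hx.
have [/eqP x0z | x0nz] := boolP (x0 == 0).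
  have hx' : forall s, is_derive s (1:R) x (A *m x s).
    by move=> s; have := hx s; rewrite x0z !mulmx0 addr0.
  have x00 : x 0 = 0 by rewrite hx00 x0z.
  have [T [T0 hT]] := zero_sol x00 hx'.
  exists T; split => // xi /andP [xi0 xiT].
  rewrite /cost_to_go Rint_zero; last first.
    move=> s /andP [s0 sxi].
    rewrite hT; last by rewrite s0 (le_trans sxi xiT).
    by rewrite x0z mulmx0 !quad0 addr0.
  by rewrite hT ?xi0 ?xiT // x0z !quad0 subrr mulr0.
have hL := schur pR pB x0nz.
rewrite quad_lin quadD in hL.
pose xd := fun s => A *m x s + B *m (Fk *m x0).
pose psi : R -> R := fun s => bil Pt (xd s) (x s) + bil Pt (x s) (xd s).
pose f : R -> R := fun s => quad Q (x s) + quad Rw (Fk *m x0).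
pose V : R -> R := fun s => quad Pt (x s).
have hV : forall s, is_derive s (1:R) V (psi s).
  by move=> s; exact: (is_derive_bil Pt (hx s) (hx s)).
have hxd : forall s, is_derive s (1:R) xd (A *m xd s).
  by move=> s; exact: (is_derive_addc _ (is_derive_mulmx A (hx s))).
have cpsi : continuous psi.
  apply: (@deriv_cont _ psi (fun s => (bil Pt (A *m xd s) (x s) + bil Pt (xd s) (xd s))
     + (bil Pt (xd s) (xd s) + bil Pt (x s) (A *m xd s)))) => s.
  exact: (is_deriveD (is_derive_bil Pt (hxd s) (hx s)) (is_derive_bil Pt (hx s) (hxd s))).
have cf : continuous f.
  apply: (@deriv_cont _ f (fun s => (bil Q (xd s) (x s) + bil Q (x s) (xd s)) + 0)) => s.
  exact: (is_deriveD (is_derive_bil Q (hx s) (hx s)) (is_derive_cst _ _ _)).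
have epsi : psi 0 = quad ((A + B *m Fk)^T *m Pt) x0 + quad (Pt *m (A + B *m Fk)) x0.
  rewrite /psi.   have -> : xd 0 = (A + B *m Fk) *m x0 by rewrite /xd hx00 mulmxDl mulmxA.
  by rewrite /bil /quad hx00 trmx_mul !mulmxA.
have ef : f 0 = quad Q x0 + quad Rw (Fk *m x0) by rewrite /f hx00.
have eV0 : V 0 = quad Pt x0 by rewrite /V hx00.
clear hx00.
move: hL epsi ef; set S1 := quad (_ *m Pt) x0; set S2 := quad (Pt *m _) x0.
set q1 := quad Rw _; set q2 := quad Q x0 => hL epsi ef.
pose L := - alpha * (S1 + S2) - q2 - q1.
have Lp : 0 < L by rewrite /L; lra.
have alp : 0 < alpha by lra.
have eps1 : 0 < L / (2 * alpha) by apply: divr_gt0 => //; lra.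
have eps2 : 0 < L / 2 by apply: divr_gt0 => //; lra.
have [e1 e1p He1] : exists2 e : R, 0 < e & forall s, ball (0:R) e s ->
    `|psi 0 - psi s| < L / (2 * alpha).
  have := cpsi 0; move/cvgrPdist_lt => /(_ _ eps1).
  by move/nbhs_ballP => [e e0 He]; exists e.
have [e2 e2p He2] : exists2 e : R, 0 < e & forall s, ball (0:R) e s ->
    `|f 0 - f s| < L / 2.
  have := cf 0; move/cvgrPdist_lt => /(_ _ eps2).
  by move/nbhs_ballP => [e e0 He]; exists e.
have := le_refl (Num.min e1 e2); rewrite le_min => /andP [m1 m2].
have mp : 0 < Num.min e1 e2 by rewrite lt_min e1p e2p.
exists (Num.min e1 e2 / 2); split; first by apply: divr_gt0.
move=> xi /andP [xi0 xid].
have xie1 : xi < e1 by lra.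
have xie2 : xi < e2 by lra.
rewrite /cost_to_go.
apply: (le_trans (@Rint_le _ f (f 0 + L / 2) xi cf xi0 _)).
  move=> s /andP [s0 sxi].
  have := He2 s (ball0 _ ); rewrite s0 /= (le_lt_trans sxi xie2) => /(_ isT) h.
  have := ler_norm (f s - f 0); rewrite distrC; lra.
have [xiz|xinz] := eqVneq xi 0.
  by rewrite xiz mulr0 -/(V 0) eV0 subrr mulr0.
have xip : 0 < xi by rewrite lt_def xinz xi0.
have [d din hd] := MVT xip (fun s _ => hV s) (continuous_subspaceT (deriv_cont hV)).
move: din; rewrite in_itv /= => /andP [d0 dxi].
have := He1 d (ball0 _); rewrite (ltW d0) /= (lt_trans dxi xie1) => /(_ isT) h.
have hpd : psi d <= psi 0 + L / (2 * alpha).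
  have := ler_norm (psi d - psi 0); rewrite distrC; lra.
have hapd : alpha * psi d <= alpha * psi 0 + L / 2.
  have e : alpha * (L / (2 * alpha)) = L / 2.
    by field; apply/negP => /eqP; lra.
  have := ler_wpM2l (ltW alp) hpd; rewrite (mulrDr alpha (psi 0)) e //.
have h2 : (f 0 + L / 2) * xi <= (- (alpha * psi d)) * xi.
  by apply: ler_wpM2r => //; rewrite epsi /L in hapd *; lra.
rewrite -/(V 0) -/(V xi) eV0 in hd *.
rewrite subr0 in hd.
have : alpha * (V 0 - V xi) = - (alpha * psi d) * xi.
  by rewrite eV0 -opprB hd; ring.
rewrite eV0 => ->; exact: h2.
Qed.
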